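(* Let $\varphi:S^1\to S^1$ be a minimal orientation preserving circle homeomorphism with lift $\Phi$, and for $x_0\in\mathbb{R}$ let $\Gamma(x_0)$ be the curlicue generated by the orbit $u_n=\Phi^n(x_0)$. Then either $\Gamma(x_0)$ is bounded for every $x_0$, or $\Gamma(x_0)$ is unbounded for every $x_0$. Moreover, in the bounded case there is a closed curve $\tau=u(S^1)$, where $u:S^1\to\mathbb{C}$ is a continuous function, whose shape does not depend on $x_0$, such that for every $x_0$ the vertices of $\Gamma(x_0)$ lie on the translate $\tau-u(x_0)$ of $\tau$.
   Context: Identify $S^1=\mathbb{R}/\mathbb{Z}$ via $x\mapsto\exp(2\pi\imath x)$; a lift of $\varphi$ is a homeomorphism $\Phi:\mathbb{R}\to\mathbb{R}$ with $\Phi(x+1)=\Phi(x)+1$ projecting to $\varphi$. For a real sequence $u=(u_n)_{n\ge0}$, the curlicue is the piecewise linear curve in $\mathbb{C}$ passing consecutively through $z_0=0$ and $z_n=\sum_{k=0}^{n-1}\exp(2\pi\imath u_k)$, $n\ge1$; these $z_n$ are its vertices. A curve is bounded if it has finite diameter. *)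

(* Defs.v *)
From Stdlib Require Import Reals.
From Coquelicot Require Import Coquelicot.
Open Scope R_scope.

Fixpoint iter_fun (f : R -> R) (n : nat) (x : R) : R :=
  match n with
  | O => x
  | S m => f (iter_fun f m x)
  end.

Definition e2pi (t : R) : C := (cos (2 * PI * t), sin (2 * PI * t)).

Definition is_lift_of_circle_homeo (Phi : R -> R) : Prop :=
  (forall x, continuous Phi x) /\
  (exists Psi : R -> R, (forall x, continuous Psi x) /\
     (forall x, Psi (Phi x) = x) /\ (forall y, Phi (Psi y) = y)) /\
  (forall x, Phi (x + 1) = Phi x + 1).

(* the projected homeomorphism preserves orientation iff its lift increases *)
Definition orientation_preserving (Phi : R -> R) : Prop :=
  forall x y, x < y -> Phi x < Phi y.

(* y (in R) lies over a point of the full (two-sided) orbit of the projection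
   of x: y = Phi^n(x) or x = Phi^n(y), i.e. y = Phi^m(x) for some m in Z. *)
Definition in_full_orbit (Phi : R -> R) (x y : R) : Prop :=
  exists n : nat, iter_fun Phi n x = y \/ iter_fun Phi n y = x.

Definition minimal_lift (Phi : R -> R) : Prop :=
  forall x y eps, 0 < eps ->
    exists z (k : Z), in_full_orbit Phi x z /\ Rabs (z - y - IZR k) < eps.

Fixpoint curlicue_vertex (Phi : R -> R) (x0 : R) (n : nat) : C :=
  match n with
  | O => 0%C
  | S m => Cplus (curlicue_vertex Phi x0 m) (e2pi (iter_fun Phi m x0))
  end.

Definition curlicue (Phi : R -> R) (x0 : R) (w : C) : Prop :=
  exists (n : nat) (t : R), 0 <= t <= 1 /\
    w = Cplus (Cmult (RtoC (1 - t)) (curlicue_vertex Phi x0 n))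
              (Cmult (RtoC t) (curlicue_vertex Phi x0 (S n))).

Definition bounded_set (S : C -> Prop) : Prop :=
  exists M : R, forall w v, S w -> S v -> Cmod (Cminus w v) <= M.

(* Main.v *)
Require Import Defs.
From Stdlib Require Import Reals Lra Lia.
From Coquelicot Require Import Coquelicot.
Open Scope R_scope.

Definition sup (E : R -> Prop) : R := real (Lub_Rbar E).

Lemma sup_spec (E : R -> Prop) (B : R) :
  (exists a, E a) -> (forall t, E t -> Rabs t <= B) ->
  (forall t, E t -> t <= sup E) /\
  (forall M, (forall t, E t -> t <= M) -> sup E <= M).
Proof.
  intros [a Ha] HB. unfold sup.
  destruct (Lub_Rbar_correct E) as [Hub Hl].
  destruct (Lub_Rbar E) as [r| |] eqn:Hr.
  - simpl. split.
    + intros t Ht. exact (Hub t Ht).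
    + intros M HM. apply (Hl (Finite M)). intros t Ht. simpl. now apply HM.
  - exfalso. assert (H := Hl (Finite B)). simpl in H. apply H.
    intros t Ht. simpl. specialize (HB t Ht). apply Rabs_le_between in HB. lra.
  - exfalso. exact (Hub a Ha).
Qed.

Lemma sup_ub E B t : (exists a, E a) -> (forall t, E t -> Rabs t <= B) -> E t -> t <= sup E.
Proof. intros H1 H2 H3. exact (proj1 (sup_spec E B H1 H2) t H3). Qed.
Lemma sup_lub E B M : (exists a, E a) -> (forall t, E t -> Rabs t <= B) ->
  (forall t, E t -> t <= M) -> sup E <= M.
Proof. intros H1 H2 H3. exact (proj2 (sup_spec E B H1 H2) M H3). Qed.
Lemma sup_approx E B eps : (exists a, E a) -> (forall t, E t -> Rabs t <= B) -> 0 < eps ->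
  exists t, E t /\ sup E - eps < t.
Proof.
  intros H1 H2 He. destruct (Classical_Prop.classic (exists t, E t /\ sup E - eps < t)) as [H|H]; auto.
  exfalso. assert (sup E <= sup E - eps); [|lra].
  apply (sup_lub E B); auto. intros t Ht. apply Rnot_lt_le. intro. apply H. eauto.
Qed.

Definition inf (E : R -> Prop) : R := - sup (fun t => E (- t)).

Lemma inf_aux E B : (exists a, E a) -> (forall t, E t -> Rabs t <= B) ->
  (exists a, (fun t => E (- t)) a) /\ (forall t, E (- t) -> Rabs t <= B).
Proof.
  intros [a Ha] H2. split. exists (- a). now rewrite Ropp_involutive.
  intros t Ht. rewrite <- Rabs_Ropp. auto.
Qed.

Lemma inf_lb E B t : (exists a, E a) -> (forall t, E t -> Rabs t <= B) -> E t -> inf E <= t.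
Proof.
  intros H1 H2 H3. destruct (inf_aux E B H1 H2) as [A1 A2]. unfold inf.
  assert (- t <= sup (fun t => E (- t))); [|lra].
  apply (sup_ub _ B); auto. now rewrite Ropp_involutive.
Qed.
Lemma inf_glb E B M : (exists a, E a) -> (forall t, E t -> Rabs t <= B) ->
  (forall t, E t -> M <= t) -> M <= inf E.
Proof.
  intros H1 H2 H3. destruct (inf_aux E B H1 H2) as [A1 A2]. unfold inf.
  assert (sup (fun t => E (- t)) <= - M); [|lra].
  apply (sup_lub _ B); auto. intros t Ht. specialize (H3 _ Ht). lra.
Qed.
Lemma inf_approx E B eps : (exists a, E a) -> (forall t, E t -> Rabs t <= B) -> 0 < eps ->
  exists t, E t /\ t < inf E + eps.
Proof.
  intros H1 H2 He. destruct (inf_aux E B H1 H2) as [A1 A2].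
  destruct (sup_approx _ B eps A1 A2 He) as [t [Ht Ht2]]. exists (- t). split; auto.
  unfold inf. lra.
Qed.

Lemma cont_ed (f : R -> R) x : continuous f x ->
  forall eps, 0 < eps -> exists d, 0 < d /\ forall y, Rabs (y - x) < d -> Rabs (f y - f x) < eps.
Proof.
  intros H eps He. apply continuity_pt_filterlim in H.
  destruct (H eps He) as [d [Hd Hd2]]. exists d. split; auto.
  intros y Hy. destruct (Req_dec y x) as [->|Hne]. rewrite Rminus_eq_0, Rabs_R0; auto.
  apply (Hd2 y). split; [split; [exact I| auto] |]. simpl. unfold R_dist. auto.
Qed.

Lemma ed_cont (f : R -> R) x :
  (forall eps, 0 < eps -> exists d, 0 < d /\ forall y, Rabs (y - x) < d -> Rabs (f y - f x) < eps)
  -> continuous f x.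
Proof.
  intros H. apply continuity_pt_filterlim. intros eps He.
  destruct (H eps He) as [d [Hd Hd2]]. exists d. split; auto.
  intros y [_ Hy]. simpl in *. unfold R_dist in *. auto.
Qed.

Lemma Z_cases (k : Z) : exists n : nat, IZR k = INR n \/ IZR k = - INR n.
Proof.
  destruct (Z.le_gt_cases 0 k).
  - exists (Z.to_nat k). left. rewrite INR_IZR_INZ, Znat.Z2Nat.id; auto.
  - exists (Z.to_nat (- k)). right. rewrite INR_IZR_INZ, Znat.Z2Nat.id by lia.
    rewrite opp_IZR. ring.
Qed.

Lemma per_int (h : R -> R) (Hp : forall x, h (x + 1) = h x) x k : h (x + IZR k) = h x.
Proof.
  destruct (Z_cases k) as [n [-> | ->]].
  - induction n. simpl. now rewrite Rplus_0_r.
    rewrite S_INR, <- Rplus_assoc, Hp. auto.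
  - revert x. induction n; intro x. simpl. now rewrite Ropp_0, Rplus_0_r.
    rewrite S_INR. replace (x + - (INR n + 1)) with ((x - 1) + - INR n) by ring.
    rewrite IHn. rewrite <- (Hp (x - 1)). f_equal. ring.
Qed.

Lemma shift_int (F : R -> R) (Hp : forall x, F (x + 1) = F x + 1) x k : F (x + IZR k) = F x + IZR k.
Proof.
  pose (h := fun y => F y - y).
  assert (Hh : forall y, h (y + 1) = h y) by (intro y; unfold h; rewrite Hp; ring).
  assert (H := per_int h Hh x k). unfold h in H. lra.
Qed.

Lemma iter_succ_r (f : R -> R) n x : iter_fun f (S n) x = iter_fun f n (f x).
Proof. revert x; induction n; intro x; simpl; auto. simpl in IHn. now rewrite <- IHn. Qed.

Lemma iter_inv (Phi Psi : R -> R) (H1 : forall x, Psi (Phi x) = x) n z :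
  iter_fun Psi n (iter_fun Phi n z) = z.
Proof.
  revert z; induction n; intro z; auto.
  rewrite (iter_succ_r Phi). simpl. rewrite IHn. auto.
Qed.

Lemma iter_shift (Phi : R -> R) (HP1 : forall x, Phi (x + 1) = Phi x + 1) n x k :
  iter_fun Phi n (x + IZR k) = iter_fun Phi n x + IZR k.
Proof. induction n; simpl; auto. rewrite IHn. apply shift_int; auto. Qed.

Lemma Psi_shift (Phi Psi : R -> R) (HP1 : forall x, Phi (x + 1) = Phi x + 1)
  (H1 : forall x, Psi (Phi x) = x) (H2 : forall y, Phi (Psi y) = y) y k :
  Psi (y + IZR k) = Psi y + IZR k.
Proof.
  rewrite <- (H2 y) at 1. rewrite <- shift_int by auto. apply H1.
Qed.

Lemma fwd_dense (Phi Psi : R -> R)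
  (HPc : forall x, continuous Phi x) (HQc : forall x, continuous Psi x)
  (H1 : forall x, Psi (Phi x) = x) (H2 : forall y, Phi (Psi y) = y)
  (HP1 : forall x, Phi (x + 1) = Phi x + 1) (Hmin : minimal_lift Phi) (x0 : R) :
  forall y eps N, 0 < eps -> exists n k, (N <= n)%nat /\
     Rabs (iter_fun Phi n x0 + IZR k - y) < eps.
Proof.
  set (u := fun n => iter_fun Phi n x0 - IZR (Int_part (iter_fun Phi n x0))).
  assert (Hu : forall n, 0 <= u n <= 1).
  { intro n. unfold u. destruct (base_Int_part (iter_fun Phi n x0)). lra. }
  set (a := fun N => sup (fun t => exists n, (N <= n)%nat /\ t = u n)).
  assert (Ane : forall N, exists t, (fun t => exists n, (N <= n)%nat /\ t = u n) t).
  { intro N. exists (u N). exists N. auto. }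
  assert (Ab : forall N t, (fun t => exists n, (N <= n)%nat /\ t = u n) t -> Rabs t <= 1).
  { intros N t [n [_ ->]]. destruct (Hu n). rewrite Rabs_right; lra. }
  assert (Ha : forall N, 0 <= a N <= 1).
  { intro N. split.
    - apply Rle_trans with (u N). apply (proj1 (Hu _)). apply (sup_ub _ 1); [apply Ane|apply Ab|]. exists N; auto.
    - apply (sup_lub _ 1); [apply Ane|apply Ab|]. intros t [n [_ ->]]. apply (proj2 (Hu _)). }
  set (l := inf (fun t => exists N, t = a N)).
  assert (Lne : exists t, (fun t => exists N, t = a N) t) by (exists (a 0%nat); eauto).
  assert (Lb : forall t, (fun t => exists N, t = a N) t -> Rabs t <= 1).
  { intros t [N ->]. destruct (Ha N). rewrite Rabs_right; lra. }
  assert (Hcl : forall eps N, 0 < eps -> exists n, (N <= n)%nat /\ Rabs (u n - l) < eps).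
  { intros eps N He.
    destruct (inf_approx _ 1 eps Lne Lb He) as [t [[M ->] HM]].
    set (N' := Nat.max N M).
    assert (l <= a N') by (apply (inf_lb _ 1); [apply Lne|apply Lb|]; exists N'; auto).
    assert (a N' <= a M).
    { apply (sup_lub _ 1); [apply Ane|apply Ab|]. intros t [n [Hn ->]]. apply (sup_ub _ 1); [apply Ane|apply Ab|].
      exists n; split; auto. unfold N' in Hn. lia. }
    destruct (sup_approx _ 1 eps (Ane N') (Ab N') He) as [t [[n [Hn ->]] Hn2]].
    assert (u n <= a N') by (apply (sup_ub _ 1); [apply Ane|apply Ab|]; exists n; auto).
    exists n. split. unfold N' in Hn; lia. apply Rabs_lt_between. change (sup _) with (a N') in Hn2. unfold l in *. lra. }
  set (W := fun y => forall eps N, 0 < eps -> exists n k, (N <= n)%nat /\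
     Rabs (iter_fun Phi n x0 + IZR k - y) < eps).
  assert (Wl : W l).
  { intros eps N He. destruct (Hcl eps N He) as [n [Hn Hn2]].
    exists n, (- Int_part (iter_fun Phi n x0))%Z. split; auto.
    rewrite opp_IZR. unfold u in Hn2. replace (iter_fun Phi n x0 + - IZR (Int_part (iter_fun Phi n x0)) - l) with
      (iter_fun Phi n x0 - IZR (Int_part (iter_fun Phi n x0)) - l) by ring. auto. }
  assert (WP : forall y, W y -> W (Phi y)).
  { intros y Wy eps N He. destruct (cont_ed Phi y (HPc y) eps He) as [d [Hd Hd2]].
    destruct (Wy d N Hd) as [n [k [Hn Hn2]]]. exists (S n), k. split; [lia|].
    simpl. rewrite <- shift_int by auto. apply Hd2.
    replace (iter_fun Phi n x0 + IZR k - y) with (iter_fun Phi n x0 + IZR k - y) by ring. auto. }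
  assert (WQ : forall y, W y -> W (Psi y)).
  { intros y Wy eps N He. destruct (cont_ed Psi y (HQc y) eps He) as [d [Hd Hd2]].
    destruct (Wy d (S N) Hd) as [n [k [Hn Hn2]]]. destruct n as [|n]; [lia|].
    exists n, k. split; [lia|].
    simpl in Hd2. specialize (Hd2 _ Hn2). simpl in Hd2.
    rewrite (Psi_shift Phi Psi) in Hd2 by auto. rewrite H1 in Hd2. auto. }
  assert (WPn : forall n y, W y -> W (iter_fun Phi n y)).
  { induction n; intros y Wy; simpl; auto. }
  assert (WQn : forall n y, W y -> W (iter_fun Psi n y)).
  { induction n; intros y Wy; simpl; auto. }
  assert (Wall : forall y, W y).
  { intros y eps N He.
    destruct (Hmin l y (eps/2) ltac:(lra)) as [z [k [Hz Hzk]]].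
    assert (Wz : W z).
    { destruct Hz as [n [Hn | Hn]]. rewrite <- Hn. auto.
      assert (E := iter_inv Phi Psi H1 n z). rewrite Hn in E. rewrite <- E. auto. }
    destruct (Wz (eps/2) N ltac:(lra)) as [n [k' [Hn Hn2]]].
    exists n, (k' - k)%Z. split; auto. rewrite minus_IZR.
    apply Rabs_lt_between in Hn2. apply Rabs_lt_between in Hzk. apply Rabs_lt_between. lra. }
  exact Wall.
Qed.

Fixpoint ssum (f : R -> R) (Phi : R -> R) (x0 : R) (n : nat) : R :=
  match n with
  | O => 0
  | S m => ssum f Phi x0 m + f (iter_fun Phi m x0)
  end.

Lemma inf_ext E E' B : (exists a, E a) -> (forall t, E t -> Rabs t <= B) ->
  (forall t, E t <-> E' t) -> inf E = inf E'.
Proof.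
  intros H1 H2 H3.
  assert (H1' : exists a, E' a) by (destruct H1 as [a Ha]; exists a; apply H3; auto).
  assert (H2' : forall t, E' t -> Rabs t <= B) by (intros t Ht; apply H2, H3, Ht).
  apply Rle_antisym.
  - apply (inf_glb _ B); auto. intros t Ht. apply (inf_lb _ B); auto. apply H3; auto.
  - apply (inf_glb _ B); auto. intros t Ht. apply (inf_lb _ B); auto. apply H3; auto.
Qed.

Lemma sup_ext E E' B : (exists a, E a) -> (forall t, E t -> Rabs t <= B) ->
  (forall t, E t <-> E' t) -> sup E = sup E'.
Proof.
  intros H1 H2 H3.
  assert (H1' : exists a, E' a) by (destruct H1 as [a Ha]; exists a; apply H3; auto).
  assert (H2' : forall t, E' t -> Rabs t <= B) by (intros t Ht; apply H2, H3, Ht).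
  apply Rle_antisym.
  - apply (sup_lub _ B); auto. intros t Ht. apply (sup_ub _ B); auto. apply H3; auto.
  - apply (sup_lub _ B); auto. intros t Ht. apply (sup_ub _ B); auto. apply H3; auto.
Qed.

Definition rj (j : nat) : R := / (INR j + 1).

Lemma rj_pos j : 0 < rj j.
Proof. unfold rj. apply Rinv_0_lt_compat. pose proof (pos_INR j). lra. Qed.

Lemma rj_mono j j' : (j <= j')%nat -> rj j' <= rj j.
Proof.
  intro H. unfold rj. apply Rinv_le_contravar. pose proof (pos_INR j). lra.
  apply le_INR in H. lra.
Qed.

Lemma rj_double j : rj (2 * j + 1) = rj j / 2.
Proof.
  unfold rj. rewrite plus_INR, mult_INR. simpl (INR 2). simpl (INR 1).
  pose proof (pos_INR j). field. lra.
Qed.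

Lemma rj_small d N : 0 < d -> exists j, (N <= j)%nat /\ rj j < d.
Proof.
  intro Hd. destruct (archimed_cor1 d Hd) as [M [HM HM0]].
  exists (N + M)%nat. split. lia.
  apply Rle_lt_trans with (/ INR M); auto. unfold rj. apply Rinv_le_contravar.
  apply lt_0_INR; auto. rewrite plus_INR. pose proof (pos_INR N). lra.
Qed.

Lemma lsc_sol (Phi Psi : R -> R)
  (HPc : forall x, continuous Phi x) (HQc : forall x, continuous Psi x)
  (H1 : forall x, Psi (Phi x) = x) (H2 : forall y, Phi (Psi y) = y)
  (HP1 : forall x, Phi (x + 1) = Phi x + 1) (x0 : R)
  (f : R -> R) (Hfc : forall x, continuous f x) (Hfp : forall x, f (x + 1) = f x)
  (B : R) (HB : forall n, Rabs (ssum f Phi x0 n) <= B)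
  (Hd : forall y eps N, 0 < eps -> exists n k, (N <= n)%nat /\
     Rabs (iter_fun Phi n x0 + IZR k - y) < eps) :
  exists g : R -> R, (forall x, Rabs (g x) <= B) /\ (forall x, g (x + 1) = g x) /\
    (forall x, g (Phi x) = g x + f x) /\
    (forall x eps, 0 < eps -> exists d, 0 < d /\ forall y, Rabs (y - x) < d -> g x - eps < g y).
Proof.
  set (s := ssum f Phi x0). set (xs := fun n => iter_fun Phi n x0).
  set (E := fun j x t => exists n k, (j <= n)%nat /\ Rabs (xs n + IZR k - x) < rj j /\ t = s n).
  assert (Ene : forall j x, exists t, E j x t).
  { intros j x. destruct (Hd x (rj j) j (rj_pos j)) as [n [k [Hn Hk]]].
    exists (s n), n, k. auto. }
  assert (Eb : forall j x t, E j x t -> Rabs t <= B).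
  { intros j x t [n [k [_ [_ ->]]]]. apply HB. }
  set (m := fun j x => inf (E j x)).
  assert (Hm : forall j x, Rabs (m j x) <= B).
  { intros j x. destruct (Ene j x) as [t0 Ht0].
    assert (m j x <= t0) by (apply (inf_lb _ B); auto; apply Eb).
    assert (-B <= m j x).
    { apply (inf_glb _ B); auto. apply Eb. intros t Ht. specialize (Eb _ _ _ Ht).
      apply Rabs_le_between in Eb. lra. }
    specialize (Eb _ _ _ Ht0). apply Rabs_le_between in Eb. apply Rabs_le_between. lra. }
  assert (Emono : forall j j' x y, (j <= j')%nat -> rj j' + Rabs (y - x) <= rj j ->
     forall t, E j' y t -> E j x t).
  { intros j j' x y Hj Hr t [n [k [Hn [Hk ->]]]]. exists n, k. split; [lia|]. split; auto.
    replace (xs n + IZR k - x) with ((xs n + IZR k - y) + (y - x)) by ring.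
    eapply Rle_lt_trans. apply Rabs_triang. lra. }
  assert (mmono : forall j j' x y, (j <= j')%nat -> rj j' + Rabs (y - x) <= rj j ->
     m j x <= m j' y).
  { intros j j' x y Hj Hr. apply (inf_glb _ B); auto. apply Eb. intros t Ht.
    apply (inf_lb _ B); auto. apply Eb. eapply Emono; eauto. }
  set (F := fun x t => exists j, t = m j x).
  assert (Fne : forall x, exists t, F x t) by (intro x; exists (m 0%nat x), 0%nat; auto).
  assert (Fb : forall x t, F x t -> Rabs t <= B) by (intros x t [j ->]; auto).
  set (g := fun x => sup (F x)).
  assert (m_le_g : forall j x, m j x <= g x).
  { intros j x. apply (sup_ub _ B); auto. apply Fb. exists j; auto. }
  assert (g_approx : forall x eps, 0 < eps -> exists j, g x - eps < m j x).
  { intros x eps He. destruct (sup_approx (F x) B eps (Fne x) (Fb x) He) as [t [[j ->] Ht]].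
    exists j; auto. }
  exists g. split; [|split; [|split]].
  - intro x. assert (g x <= B).
    { apply (sup_lub _ B); auto. apply Fb. intros t [j ->]. specialize (Hm j x).
      apply Rabs_le_between in Hm. lra. }
    assert (m 0%nat x <= g x) by auto. specialize (Hm 0%nat x).
    apply Rabs_le_between in Hm. apply Rabs_le_between. lra.
  - intro x. unfold g. apply (sup_ext _ _ B); auto. apply Fb.
    assert (Hmx : forall j, m j (x + 1) = m j x).
    { intro j. unfold m. apply (inf_ext _ _ B); auto. apply Eb.
      intro t. split.
      + intros [n [k [Hn [Hk ->]]]]. exists n, (k - 1)%Z. split; auto. split; auto.
        rewrite minus_IZR. replace (xs n + (IZR k - IZR 1) - x) with (xs n + IZR k - (x + 1)) by ring. auto.
      + intros [n [k [Hn [Hk ->]]]]. exists n, (k + 1)%Z. split; auto. split; auto.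
        rewrite plus_IZR. replace (xs n + (IZR k + IZR 1) - (x + 1)) with (xs n + IZR k - x) by ring. auto. }
    intro t. split; intros [j ->]; exists j; auto.
  - intro x. apply Rle_antisym.
    +
      apply Rle_plus_epsilon. intros eps He.
      apply (sup_lub _ B); auto. apply Fb. intros t [J ->].
      destruct (cont_ed Phi x (HPc x) (rj J) (rj_pos J)) as [d [Hd0 Hd1]].
      destruct (cont_ed f x (Hfc x) (eps/2) ltac:(lra)) as [df [Hdf0 Hdf1]].
      destruct (rj_small (Rmin d df) J ltac:(apply Rmin_pos; auto)) as [j [Hj Hjr]].
      destruct (inf_approx (E j x) B (eps/2) (Ene j x) (Eb j x) ltac:(lra)) as [t [[n [k [Hn [Hk ->]]]] Ht]].
      assert (E J (Phi x) (s (S n))).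
      { exists (S n), k. split; [lia|]. split; auto.
        change (xs (S n)) with (Phi (xs n)). rewrite <- shift_int by auto.
        apply Hd1. eapply Rlt_le_trans; [apply Hk|]. pose proof (Rmin_l d df). lra. }
      assert (m J (Phi x) <= s (S n)) by (apply (inf_lb _ B); auto; apply Eb).
      assert (Hf : Rabs (f (xs n + IZR k) - f x) < eps/2).
      { apply Hdf1. eapply Rlt_le_trans; [apply Hk|]. pose proof (Rmin_r d df). lra. }
      rewrite per_int in Hf by auto. apply Rabs_lt_between in Hf.
      assert (m j x <= g x) by auto.
      change (s (S n)) with (s n + f (xs n)) in H0. change (inf (E j x)) with (m j x) in Ht. lra.
    +
      apply Rle_plus_epsilon. intros eps He.
      destruct (g_approx x (eps/2) ltac:(lra)) as [J HJ].
      destruct (cont_ed f x (Hfc x) (eps/2) ltac:(lra)) as [df [Hdf0 Hdf1]].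
      destruct (cont_ed Psi (Phi x) (HQc (Phi x)) (Rmin (rj J) df) ltac:(apply Rmin_pos; auto; apply rj_pos)) as [d [Hd0 Hd1]].
      rewrite H1 in Hd1.
      destruct (rj_small d (S J) Hd0) as [j [Hj Hjr]].
      assert (g x + f x - eps <= m j (Phi x)).
      { apply (inf_glb _ B); auto. apply Eb. intros t [n [k [Hn [Hk ->]]]].
        destruct n as [|n]; [lia|].
        assert (Hq : Rabs (Psi (xs (S n) + IZR k) - x) < Rmin (rj J) df).
        { apply Hd1. lra. }
        rewrite (Psi_shift Phi Psi) in Hq by auto. change (xs (S n)) with (Phi (xs n)) in Hq.
        rewrite H1 in Hq.
        assert (E J x (s n)).
        { exists n, k. split; [lia|]. split; auto. eapply Rlt_le_trans; [apply Hq|]. apply Rmin_l. }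
        assert (m J x <= s n) by (apply (inf_lb _ B); auto; apply Eb).
        assert (Hf : Rabs (f (xs n + IZR k) - f x) < eps/2).
        { apply Hdf1. eapply Rlt_le_trans; [apply Hq|]. apply Rmin_r. }
        rewrite per_int in Hf by auto. apply Rabs_lt_between in Hf.
        change (s (S n)) with (s n + f (xs n)). lra. }
      assert (m j (Phi x) <= g (Phi x)) by auto. lra.
  - intros x eps He. destruct (g_approx x eps He) as [j Hj].
    exists (rj (2 * j + 1)). split. apply rj_pos.
    intros y Hy. assert (m j x <= m (2 * j + 1)%nat y).
    { apply mmono. lia. rewrite rj_double in *. lra. }
    assert (m (2 * j + 1)%nat y <= g y) by auto. lra.
Qed.

Lemma ssum_opp f Phi x0 n : ssum (fun x => - f x) Phi x0 n = - ssum f Phi x0 n.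
Proof. induction n; simpl. ring. rewrite IHn. ring. Qed.

Lemma iter_full_orbit (Phi Psi : R -> R) (H1 : forall x, Psi (Phi x) = x) (h : R -> R)
  (Hh : forall x, h (Phi x) = h x) x z : in_full_orbit Phi x z -> h z = h x.
Proof.
  assert (Hn : forall n y, h (iter_fun Phi n y) = h y).
  { induction n; intro y; simpl; auto. rewrite Hh; auto. }
  intros [n [Hz | Hz]]. rewrite <- Hz. auto. rewrite <- Hz. symmetry. auto.
Qed.

Lemma GH (Phi Psi : R -> R)
  (HPc : forall x, continuous Phi x) (HQc : forall x, continuous Psi x)
  (H1 : forall x, Psi (Phi x) = x) (H2 : forall y, Phi (Psi y) = y)
  (HP1 : forall x, Phi (x + 1) = Phi x + 1) (Hmin : minimal_lift Phi) (x0 : R)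
  (f : R -> R) (Hfc : forall x, continuous f x) (Hfp : forall x, f (x + 1) = f x)
  (B : R) (HB : forall n, Rabs (ssum f Phi x0 n) <= B) :
  exists g : R -> R, (forall x, continuous g x) /\ (forall x, g (x + 1) = g x) /\
    (forall x, g (Phi x) = g x + f x) /\ (forall x, Rabs (g x) <= B).
Proof.
  assert (Hd := fwd_dense Phi Psi HPc HQc H1 H2 HP1 Hmin x0).
  destruct (lsc_sol Phi Psi HPc HQc H1 H2 HP1 x0 f Hfc Hfp B HB Hd) as [g1 [Hb1 [Hp1 [Hc1 Hl1]]]].
  assert (Hfc' : forall x, continuous (fun x => - f x) x).
  { intro x. apply ed_cont. intros eps He. destruct (cont_ed f x (Hfc x) eps He) as [d [Hd0 Hd1]].
    exists d. split; auto. intros y Hy. specialize (Hd1 y Hy).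
    replace (- f y - - f x) with (- (f y - f x)) by ring. rewrite Rabs_Ropp. auto. }
  assert (Hfp' : forall x, (fun x => - f x) (x + 1) = (fun x => - f x) x).
  { intro x. simpl. rewrite Hfp. auto. }
  assert (HB' : forall n, Rabs (ssum (fun x => - f x) Phi x0 n) <= B).
  { intro n. rewrite ssum_opp, Rabs_Ropp. auto. }
  destruct (lsc_sol Phi Psi HPc HQc H1 H2 HP1 x0 _ Hfc' Hfp' B HB' Hd) as [g2 [Hb2 [Hp2 [Hc2 Hl2]]]].
  set (h := fun x => - g2 x - g1 x).
  assert (Hh : forall x, h (Phi x) = h x).
  { intro x. unfold h. rewrite Hc1, Hc2. ring. }
  assert (Hhp : forall x, h (x + 1) = h x).
  { intro x. unfold h. rewrite Hp1, Hp2. auto. }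
  assert (Hhu : forall x eps, 0 < eps -> exists d, 0 < d /\ forall y, Rabs (y - x) < d -> h y < h x + eps).
  { intros x eps He. destruct (Hl1 x (eps/2) ltac:(lra)) as [d1 [Hd1 Hd1']].
    destruct (Hl2 x (eps/2) ltac:(lra)) as [d2 [Hd2 Hd2']].
    exists (Rmin d1 d2). split. apply Rmin_pos; auto.
    intros y Hy. assert (Rabs (y - x) < d1) by (eapply Rlt_le_trans; [apply Hy| apply Rmin_l]).
    assert (Rabs (y - x) < d2) by (eapply Rlt_le_trans; [apply Hy| apply Rmin_r]).
    specialize (Hd1' y H). specialize (Hd2' y H0). unfold h. lra. }
  assert (Hle : forall x y, h x <= h y).
  { intros x y. apply Rle_plus_epsilon. intros eps He.
    destruct (Hhu y eps He) as [d [Hd0 Hd1]].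
    destruct (Hmin x y d Hd0) as [z [k [Hz Hzk]]].
    assert (E1 : h z = h x) by (apply (iter_full_orbit Phi Psi H1 h Hh); auto).
    assert (E2 : h (z + IZR (- k)) = h z) by (apply per_int; auto).
    assert (Rabs (z + IZR (- k) - y) < d).
    { rewrite opp_IZR. replace (z + - IZR k - y) with (z - y - IZR k) by ring. auto. }
    specialize (Hd1 _ H). lra. }
  exists g1. split; [|split; [|split]]; auto.
  intro x. apply ed_cont. intros eps He.
  destruct (Hl1 x eps He) as [d1 [Hd1 Hd1']].
  destruct (Hl2 x eps He) as [d2 [Hd2 Hd2']].
  exists (Rmin d1 d2). split. apply Rmin_pos; auto.
  intros y Hy. assert (Rabs (y - x) < d1) by (eapply Rlt_le_trans; [apply Hy| apply Rmin_l]).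
  assert (Rabs (y - x) < d2) by (eapply Rlt_le_trans; [apply Hy| apply Rmin_r]).
  specialize (Hd1' y H). specialize (Hd2' y H0).
  assert (h x <= h y) by auto. assert (h y <= h x) by auto. unfold h in *.
  apply Rabs_lt_between. lra.
Qed.

Lemma cont_pair (g1 g2 : R -> R) x : continuous g1 x -> continuous g2 x ->
  continuous (fun y => (g1 y, g2 y) : C) x.
Proof.
  intros Ha Hb. unfold continuous in *.
  apply filterlim_locally. intro eps.
  pose proof (proj1 (filterlim_locally _ _) Ha eps) as A.
  pose proof (proj1 (filterlim_locally _ _) Hb eps) as B.
  eapply filter_imp; [|apply filter_and; [exact A|exact B]].
  intros y [H1 H2]. split; auto.
Qed.

Definition cf (t : R) : R := cos (2 * PI * t).
Definition sf (t : R) : R := sin (2 * PI * t).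

Lemma cf_cont x : continuous cf x.
Proof. apply continuity_pt_filterlim. unfold cf. apply derivable_continuous_pt. reg. Qed.
Lemma sf_cont x : continuous sf x.
Proof. apply continuity_pt_filterlim. unfold sf. apply derivable_continuous_pt. reg. Qed.
Lemma cf_per x : cf (x + 1) = cf x.
Proof. unfold cf. rewrite <- (cos_period (2 * PI * x) 1). f_equal. simpl. ring. Qed.
Lemma sf_per x : sf (x + 1) = sf x.
Proof. unfold sf. rewrite <- (sin_period (2 * PI * x) 1). f_equal. simpl. ring. Qed.

Lemma vertex_eq Phi x0 n : curlicue_vertex Phi x0 n = (ssum cf Phi x0 n, ssum sf Phi x0 n).
Proof.
  induction n; simpl. reflexivity. rewrite IHn. unfold Cplus, e2pi, cf, sf. simpl. reflexivity.
Qed.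

Lemma vertex_in Phi x0 n : curlicue Phi x0 (curlicue_vertex Phi x0 n).
Proof.
  exists n, 0. split. lra. destruct (curlicue_vertex Phi x0 n) as [a b].
  destruct (curlicue_vertex Phi x0 (S n)) as [c d].
  unfold Cplus, Cmult, RtoC. simpl. f_equal; ring.
Qed.

Lemma Cmod_le_sum (z : C) : Cmod z <= Rabs (fst z) + Rabs (snd z).
Proof.
  destruct z as [a b]. unfold Cmod. simpl.
  rewrite <- (sqrt_Rsqr (Rabs a + Rabs b)) by (pose proof (Rabs_pos a); pose proof (Rabs_pos b); lra).
  apply sqrt_le_1_alt. unfold Rsqr.
  pose proof (Rabs_pos a); pose proof (Rabs_pos b).
  pose proof (pow2_abs a); pose proof (pow2_abs b). simpl in *. nra.
Qed.

Lemma key (Phi Psi : R -> R)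
  (HPc : forall x, continuous Phi x) (HQc : forall x, continuous Psi x)
  (H1 : forall x, Psi (Phi x) = x) (H2 : forall y, Phi (Psi y) = y)
  (HP1 : forall x, Phi (x + 1) = Phi x + 1) (Hmin : minimal_lift Phi) (x0 : R) :
  bounded_set (curlicue Phi x0) ->
  exists (g1 g2 : R -> R) (B : R),
    (forall x, continuous g1 x) /\ (forall x, continuous g2 x) /\
    (forall x, g1 (x + 1) = g1 x) /\ (forall x, g2 (x + 1) = g2 x) /\
    (forall x, g1 (Phi x) = g1 x + cf x) /\ (forall x, g2 (Phi x) = g2 x + sf x) /\
    (forall x, Rabs (g1 x) <= B /\ Rabs (g2 x) <= B).
Proof.
  intros [M HM].
  assert (Hv : forall n, Cmod (curlicue_vertex Phi x0 n) <= M).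
  { intro n. specialize (HM _ _ (vertex_in Phi x0 n) (vertex_in Phi x0 0)).
    simpl in HM. replace (Cminus (curlicue_vertex Phi x0 n) 0%C) with (curlicue_vertex Phi x0 n) in HM; auto.
    destruct (curlicue_vertex Phi x0 n) as [a b]. unfold Cminus, Cplus, Copp, RtoC. simpl. f_equal; ring. }
  assert (Hc : forall n, Rabs (ssum cf Phi x0 n) <= M).
  { intro n. specialize (Hv n). rewrite vertex_eq in Hv.
    pose proof (Rmax_Cmod (ssum cf Phi x0 n, ssum sf Phi x0 n)). simpl in H.
    pose proof (Rmax_l (Rabs (ssum cf Phi x0 n)) (Rabs (ssum sf Phi x0 n))). lra. }
  assert (Hs : forall n, Rabs (ssum sf Phi x0 n) <= M).
  { intro n. specialize (Hv n). rewrite vertex_eq in Hv.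
    pose proof (Rmax_Cmod (ssum cf Phi x0 n, ssum sf Phi x0 n)). simpl in H.
    pose proof (Rmax_r (Rabs (ssum cf Phi x0 n)) (Rabs (ssum sf Phi x0 n))). lra. }
  destruct (GH Phi Psi HPc HQc H1 H2 HP1 Hmin x0 cf cf_cont cf_per M Hc) as [g1 [A1 [A2 [A3 A4]]]].
  destruct (GH Phi Psi HPc HQc H1 H2 HP1 Hmin x0 sf sf_cont sf_per M Hs) as [g2 [B1 [B2 [B3 B4]]]].
  exists g1, g2, M. repeat split; auto.
Qed.

Lemma vertex_u Phi (g1 g2 : R -> R)
  (A3 : forall x, g1 (Phi x) = g1 x + cf x) (B3 : forall x, g2 (Phi x) = g2 x + sf x) x0 n :
  curlicue_vertex Phi x0 n =
  Cminus (g1 (iter_fun Phi n x0), g2 (iter_fun Phi n x0)) (g1 x0, g2 x0).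
Proof.
  induction n; simpl.
  - unfold Cminus, Cplus, Copp, RtoC. simpl. f_equal; ring.
  - rewrite IHn, A3, B3. unfold Cminus, Cplus, Copp, e2pi, cf, sf. simpl. f_equal; ring.
Qed.

Theorem corollary3p6 (Phi : R -> R)
  (Hlift : is_lift_of_circle_homeo Phi)
  (Hor : orientation_preserving Phi)
  (Hmin : minimal_lift Phi) :
  ((forall x0, bounded_set (curlicue Phi x0)) \/
   (forall x0, ~ bounded_set (curlicue Phi x0))) /\
  ((forall x0, bounded_set (curlicue Phi x0)) ->
   exists u : R -> C,
     (forall x, continuous u x) /\ (forall x, u (x + 1) = u x) /\
     forall x0 (n : nat), exists y : R,
       curlicue_vertex Phi x0 n = Cminus (u y) (u x0)).
Proof.
  destruct Hlift as [HPc [[Psi [HQc [H1 H2]]] HP1]].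
  split.
  - destruct (Classical_Prop.classic (exists x0, bounded_set (curlicue Phi x0))) as [[x0 Hx0]|Hn].
    + left. intro x1.
      destruct (key Phi Psi HPc HQc H1 H2 HP1 Hmin x0 Hx0) as [g1 [g2 [B [_ [_ [_ [_ [A3 [B3 Hb]]]]]]]]].
      exists (8 * B).
      assert (Hw : forall w, curlicue Phi x1 w -> Rabs (fst w) <= 2 * B /\ Rabs (snd w) <= 2 * B).
      { intros w [n [t [Ht ->]]]. rewrite !vertex_u with (g1 := g1) (g2 := g2) by auto.
        destruct (Hb (iter_fun Phi n x1)) as [a1 a2].
        destruct (Hb (iter_fun Phi (S n) x1)) as [b1 b2].
        destruct (Hb x1) as [c1 c2].
        simpl in b1, b2. apply Rabs_le_between in a1, a2, b1, b2, c1, c2.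
        unfold Cminus, Cplus, Cmult, Copp, RtoC. simpl.
        split; apply Rabs_le_between; nra. }
      intros w v Hw1 Hv1. apply Hw in Hw1. apply Hw in Hv1.
      eapply Rle_trans. apply Cmod_le_sum.
      destruct w as [a b]; destruct v as [c d]. simpl in *.
      destruct Hw1 as [Ha Hb']. destruct Hv1 as [Hc Hd].
      apply Rabs_le_between in Ha, Hb', Hc, Hd.
      assert (Rabs (a + - c) <= 4 * B) by (apply Rabs_le_between; lra).
      assert (Rabs (b + - d) <= 4 * B) by (apply Rabs_le_between; lra).
      lra.
    + right. intros x0 Hb. apply Hn. exists x0. auto.
  - intro Hall.
    destruct (key Phi Psi HPc HQc H1 H2 HP1 Hmin 0 (Hall 0)) as [g1 [g2 [B [A1 [B1 [A2 [B2 [A3 [B3 Hb]]]]]]]]].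
    exists (fun y => (g1 y, g2 y)). split; [|split].
    + intro x. apply cont_pair; auto.
    + intro x. rewrite A2, B2. auto.
    + intros x0 n. exists (iter_fun Phi n x0). apply vertex_u; auto.
Qed.
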